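(* Every SSSCG with weakly monotonic cost functions admits an OSE $(\sigma_\ell,\nu)$ in which $\sigma_\ell$ is pure.
   Context: A symmetric Stackelberg singleton congestion game (SSSCG) consists of a leader $\ell$, a finite set $F$ of followers, a finite set $R$ of resources which every player may select (each player selects exactly one), and cost functions $c_{i,\ell},c_{i,f}:\mathbb N\to\mathbb Q$ ($i\in R$) for the leader and the followers with $c_{i,\ell}(0)=c_{i,f}(0)=0$. The leader commits to a probability distribution $\sigma_\ell$ on $R$ (pure if it puts probability $1$ on one resource). A followers' configuration is $\nu\in\mathbb N^R$ with $\sum_i\nu_i=|F|$. The followers' expected cost of resource $i$ with $x$ followers is $c^{\sigma_\ell}_{i,f}(x)=\sigma_\ell(i)c_{i,f}(x+1)+(1-\sigma_\ell(i))c_{i,f}(x)$; the leader's cost is $c_\ell^{(\sigma_\ell,\nu)}=\sum_{i\in R}\sigma_\ell(i)c_{i,\ell}(\nu_i+1)$. $\nu$ is a Nash equilibrium for $\sigma_\ell$ ($\nu\in E^{\sigma_\ell}$) if for all $i$ with $\nu_i>0$ and all $j\ne i$, $c^{\sigma_\ell}_{i,f}(\nu_i)\le c^{\sigma_\ell}_{j,f}(\nu_j+1)$. An optimistic Stackelberg equilibrium (OSE) is a pair $(\sigma_\ell,\nu)$ with $\nu\in E^{\sigma_\ell}$ minimizing $c_\ell^{(\sigma_\ell,\nu)}$ over all such pairs. Weakly monotonic: $c_{i,\ell}(x)\le c_{i,\ell}(x+1)$, $c_{i,f}(x)\le c_{i,f}(x+1)$ for all $i,x$. *)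

(* Defs.v *)
From HB Require Import structures.
From mathcomp Require Import all_boot all_order all_algebra.
Set Implicit Arguments. Unset Strict Implicit. Unset Printing Implicit Defensive.
Import Order.TTheory GRing.Theory Num.Theory.
Local Open Scope ring_scope.

(* Resources: a finType [Res]; followers: a finType [F] (only #|F| matters).
   Probabilities of the leader's mixed strategy live in an ordered field [K]
   (e.g. the reals); rational costs are embedded with [ratr]. *)

Section SSSCG.
Variables (K : realFieldType) (Res F : finType).
Variables (cl cf : Res -> nat -> rat).

Definition is_distr (sigma : Res -> K) : Prop :=
  (forall i, 0 <= sigma i) /\ \sum_(i : Res) sigma i = 1.

Definition is_pure (sigma : Res -> K) : Prop := exists i, sigma i = 1.

Definition is_config (nu : Res -> nat) : Prop :=
  (\sum_(i : Res) nu i)%N = #|F|.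

Definition fcost (sigma : Res -> K) (i : Res) (x : nat) : K :=
  sigma i * ratr (cf i x.+1) + (1 - sigma i) * ratr (cf i x).

Definition lcost (sigma : Res -> K) (nu : Res -> nat) : K :=
  \sum_(i : Res) sigma i * ratr (cl i (nu i).+1).

Definition is_NE (sigma : Res -> K) (nu : Res -> nat) : Prop :=
  forall i j, (0 < nu i)%N -> i != j ->
    fcost sigma i (nu i) <= fcost sigma j (nu j).+1.

Definition is_OSE (sigma : Res -> K) (nu : Res -> nat) : Prop :=
  [/\ is_distr sigma, is_config nu, is_NE sigma nu &
      forall sigma' nu', is_distr sigma' -> is_config nu' -> is_NE sigma' nu' ->
        lcost sigma nu <= lcost sigma' nu'].

End SSSCG.

Definition weakly_monotonic (Res : finType) (cl cf : Res -> nat -> rat) : Prop :=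
  forall i x, (cl i x <= cl i x.+1)%R /\ (cf i x <= cf i x.+1)%R.

(* Main.v *)
Require Import Defs.
From HB Require Import structures.
From mathcomp Require Import all_boot all_order all_algebra.
From mathcomp Require Import zify ring lra.
Import Order.TTheory GRing.Theory Num.Theory.
Local Open Scope ring_scope.
Set Implicit Arguments. Unset Strict Implicit.

Lemma finite_min (K : realFieldType) (T : finType) (P : pred T) (phi : T -> K) x0 :
  P x0 -> exists x, P x /\ forall y, P y -> phi x <= phi y.
Proof.
move=> Px0; case: (@arg_minP _ _ _ x0 P phi Px0) => x Px H.
by exists x; split => // y Py; apply: H.
Qed.

Lemma nat_mono (K : realFieldType) (c : nat -> K) : (forall x, c x <= c x.+1) ->
  forall x y, (x <= y)%N -> c x <= c y.
Proof.
move=> h x y; elim: y => [|y IH]; first by rewrite leqn0 => /eqP ->.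
rewrite leq_eqVlt => /orP [/eqP -> //|]; rewrite ltnS => /IH H.
exact: le_trans H (h y).
Qed.

Lemma sum3K (K : realFieldType) (Res : finType) (F : Res -> K) j k : j != k ->
  \sum_l F l = F j + F k + \sum_(l | (l != j) && (l != k)) F l.
Proof.
move=> jk; rewrite (bigD1 j) //= (bigD1 k) /=; last by rewrite eq_sym.
by rewrite addrA.
Qed.

Lemma sum3N (Res : finType) (F : Res -> nat) j k : j != k ->
  (\sum_l F l = F j + F k + \sum_(l | (l != j) && (l != k)) F l)%N.
Proof.
move=> jk; rewrite (bigD1 j) //= (bigD1 k) /=; last by rewrite eq_sym.
by rewrite addnA.
Qed.

Lemma le_sumN (Res : finType) (F : Res -> nat) j : (F j <= \sum_l F l)%N.
Proof. by rewrite (bigD1 j) //= leq_addr. Qed.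

Definition Phi (K : realFieldType) (Res : finType) (d : Res -> nat -> K) (nu : Res -> nat) : K :=
  \sum_j \sum_(x < nu j) d j x.+1.

Lemma move_lemma (K : realFieldType) (Res : finType) (d : Res -> nat -> K) (nu : Res -> nat) j k :
  j != k -> (0 < nu j)%N ->
  let g := fun l => if l == j then (nu j).-1 else if l == k then (nu k).+1 else nu l in
  (\sum_l g l = \sum_l nu l)%N /\ Phi d g + d j (nu j) = Phi d nu + d k (nu k).+1.
Proof.
move=> jk nj g.
have rest : forall (V : Type) (h : nat -> V) l, (l != j) && (l != k) -> h (g l) = h (nu l).
  by move=> V h l /andP[/negbTE jl /negbTE kl]; rewrite /g jl kl.
have gj : g j = (nu j).-1 by rewrite /g eqxx.
have gk : g k = (nu k).+1 by rewrite /g eq_sym (negbTE jk) eqxx.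
split.
  rewrite (sum3N g jk) (sum3N nu jk) gj gk.
  rewrite (eq_bigr nu); last by move=> l /(rest _ id).
  by case: (nu j) nj => // m _ /=; rewrite addSn addnS.
rewrite /Phi (sum3K _ jk) (sum3K (fun j0 => \sum_(x < nu j0) d j0 x.+1) jk) gj gk.
rewrite (eq_bigr (fun j0 => \sum_(x < nu j0) d j0 x.+1)); last first.
  by move=> l /(rest _ (fun m => \sum_(x < m) d l x.+1)).
case: (nu j) nj => // m _ /=.
rewrite !big_ord_recr /=.
set A := \sum_(i < m) _; set B := \sum_(i < nu k) _; set C := \sum_(_ | _) _.
ring.
Qed.

Lemma cap_NE (K : realFieldType) (Res : finType) (n : nat) (d : Res -> nat -> K)
  (hd : forall j x, d j x <= d j x.+1) (i : Res) (nu' : Res -> nat)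
  (hc : (\sum_j nu' j)%N = n)
  (H : forall j, j != i -> (0 < nu' j)%N -> d j (nu' j) <= d i (nu' i).+1) :
  exists nu : Res -> nat, (\sum_j nu j)%N = n /\ (nu i <= nu' i)%N /\
    forall j k, (0 < nu j)%N -> j != k -> d j (nu j) <= d k (nu k).+1.
Proof.
pose P := fun f : {ffun Res -> 'I_n.+1} =>
  ((\sum_j (f j : nat))%N == n) && (f i <= nu' i)%N.
pose phi := fun f : {ffun Res -> 'I_n.+1} => Phi d (fun j => f j : nat).
have conv : forall mu : Res -> nat, (\sum_j mu j)%N = n ->
    forall j, ([ffun l => inord (mu l) : 'I_n.+1] j : nat) = mu j.
  move=> mu hmu j; rewrite ffunE inordK // ltnS -hmu; exact: le_sumN.
have P0 : P [ffun l => inord (nu' l)].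
  rewrite /P (eq_bigr nu'); last by move=> j _; rewrite conv.
  by rewrite hc eqxx (conv nu' hc) leqnn.
have [f [Pf fmin]] := finite_min phi P0.
move: Pf; rewrite /P => /andP[/eqP sf fi].
pose nu := fun j => (f j : nat).
have numin : forall mu, (\sum_j mu j)%N = n -> (mu i <= nu' i)%N -> Phi d nu <= Phi d mu.
  move=> mu hmu hi.
  have Pm : P [ffun l => inord (mu l)].
    rewrite /P (eq_bigr mu); last by move=> j _; rewrite conv.
    by rewrite hmu eqxx (conv mu hmu) hi.
  have := fmin _ Pm; rewrite /phi.
  suff -> : Phi d (fun j => [ffun l => inord (mu l) : 'I_n.+1] j : nat) = Phi d mu by [].
  by rewrite /Phi; apply: eq_bigr => j _; rewrite (conv mu hmu).
have stepA : forall j k, (0 < nu j)%N -> j != k -> (k != i) || (nu i < nu' i)%N ->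
    d j (nu j) <= d k (nu k).+1.
  move=> j k nj jk cond; rewrite leNgt; apply/negP => lt.
  pose g := fun l => if l == j then (nu j).-1 else if l == k then (nu k).+1 else nu l.
  have := move_lemma d jk nj; rewrite -/g => -[sg hphi].
  have gi : (g i <= nu' i)%N.
    rewrite /g; case: eqP => [<-|_]; first by rewrite (leq_trans (leq_pred _) fi).
    case: eqP => [ki|_] //; move: cond; rewrite ki eqxx /=; done.
  have := numin g (etrans sg sf) gi.
  move: hphi lt; set a := Phi d g; set b := Phi d nu; move=> hphi lt hab.
  by move: hab; rewrite leNgt => /negP; apply; rewrite -(ltrD2r (d j (nu j))) hphi ltrD2l.
exists nu; split; first exact: sf; split; first exact: fi.
move=> j k nj jk.
case: (boolP ((k != i) || (nu i < nu' i)%N)) => c; first exact: stepA.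
move: c; rewrite negb_or negbK ltnNge negbK => /andP[/eqP ki hi].
have nui : nu i = nu' i by apply/eqP; rewrite eqn_leq fi hi.
subst k.
have ji : j != i by [].
case: (leqP (nu j) (nu' j)) => hj.
  apply: le_trans (nat_mono (hd j) hj) _.
  by rewrite nui; apply: H => //; exact: leq_trans nj hj.
case: (boolP [exists l, (l != j) && (nu l < nu' l)%N]).
  move=> /existsP[l /andP[lj hl]].
  have li : l != i by apply: contraTneq hl => ->; rewrite nui ltnn.
  apply: le_trans (stepA j l nj _ _) _; [by rewrite eq_sym | by rewrite li |].
  apply: le_trans (nat_mono (hd l) hl) _.
  by rewrite nui; apply: H => //; exact: leq_ltn_trans (leq0n _) hl.
rewrite negb_exists => /forallP hall.
exfalso.
have hr : (\sum_(l | l != j) nu' l <= \sum_(l | l != j) nu l)%N.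
  apply: leq_sum => l lj; move: (hall l); rewrite lj /= -leqNgt; done.
have sf' : (\sum_l nu l = n)%N := sf.
rewrite (bigD1 j) //= in hc; rewrite (bigD1 j) //= in sf'.
lia.
Qed.

Theorem theorem7 (K : realFieldType) (Res F : finType)
    (cl cf : Res -> nat -> rat)
    (hRes : (0 < #|Res|)%N)
    (hcl0 : forall i, cl i 0%N = 0) (hcf0 : forall i, cf i 0%N = 0)
    (hmono : weakly_monotonic cl cf) :
  exists (sigma : Res -> K) (nu : Res -> nat),
    is_OSE F cl cf sigma nu /\ is_pure sigma.
Proof.
pose n := #|F|.
pose e := fun i : Res => fun j : Res => if j == i then (1 : K) else 0.
pose d := fun i j x => (ratr (cf j (if j == i then x.+1 else x)) : K).
have hd : forall i j x, d i j x <= d i j x.+1.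
  by move=> i j x; rewrite /d ler_rat; case: (j == i); apply: (hmono j _).2.
have fpure : forall i j x, fcost cf (e i) j x = d i j x.
  move=> i j x; rewrite /fcost /e /d; case: (j == i).
    by rewrite mul1r subrr mul0r addr0.
  by rewrite mul0r add0r subr0 mul1r.
have NEpure : forall i nu, is_NE cf (e i) nu <->
    (forall j k, (0 < nu j)%N -> j != k -> d i j (nu j) <= d i k (nu k).+1).
  by move=> i nu; split => h j k nj jk; [rewrite -!fpure | rewrite !fpure]; apply: h.
have lpure : forall i nu, lcost cl (e i) nu = ratr (cl i (nu i).+1).
  move=> i nu; rewrite /lcost (bigD1 i) //= big1 /e ?eqxx ?mul1r ?addr0 //.
  by move=> j /negbTE ->; rewrite mul0r.
have distr_e : forall i, is_distr (e i).
  move=> i; split; first by move=> j; rewrite /e; case: (j == i).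
  by rewrite (bigD1 i) //= big1 /e ?eqxx ?addr0 // => j /negbTE ->.
pose P := fun p : Res * {ffun Res -> 'I_n.+1} =>
  ((\sum_j (p.2 j : nat))%N == n) &&
  [forall j, forall k, (0 < p.2 j)%N ==> (j != k) ==> (d p.1 j (p.2 j) <= d p.1 k (p.2 k).+1)].
pose phi := fun p : Res * {ffun Res -> 'I_n.+1} => (ratr (cl p.1 (p.2 p.1).+1) : K).
have conv : forall mu : Res -> nat, (\sum_j mu j)%N = n ->
    forall j, ([ffun l => inord (mu l) : 'I_n.+1] j : nat) = mu j.
  move=> mu hmu j; rewrite ffunE inordK // ltnS -hmu; exact: le_sumN.
have toP : forall i (mu : Res -> nat), (\sum_j mu j)%N = n ->
    (forall j k, (0 < mu j)%N -> j != k -> d i j (mu j) <= d i k (mu k).+1) ->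
    P (i, [ffun l => inord (mu l)]).
  move=> i mu hmu hne; apply/andP; split.
    by rewrite /= (eq_bigr mu) ?hmu // => j _; rewrite conv.
  apply/forallP => j; apply/forallP => k; apply/implyP; rewrite /= !(conv mu hmu) => nj.
  by apply/implyP => jk; apply: hne.
have clmono : forall i x y, (x <= y)%N -> (ratr (cl i x) : K) <= ratr (cl i y).
  move=> i; apply: nat_mono => x; rewrite ler_rat; exact: (hmono i x).1.
have [i0 _] : exists i0 : Res, true.
  by case/card_gt0P: hRes => x _; exists x.
have P0 : exists p, P p.
  pose nu' := fun j => if j == i0 then n else 0%N.
  have snu : (\sum_j nu' j)%N = n.
    by rewrite (bigD1 i0) //= big1 /nu' ?eqxx ?addn0 // => j /negbTE ->.
  have H0 : forall j, j != i0 -> (0 < nu' j)%N -> d i0 j (nu' j) <= d i0 i0 (nu' i0).+1.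
    by move=> j /negbTE; rewrite /nu' => ->.
  have [nu [snu2 [_ hne]]] := cap_NE (hd i0) snu H0.
  by exists (i0, [ffun l => inord (nu l)]); apply: toP.
case: P0 => p0 Pp0; have [[i f] [Pf fmin]] := finite_min phi Pp0.
move: (Pf) => /andP[/eqP sf /forallP hf].
exists (e i), (fun l => f l : nat); split; last by exists i; rewrite /e eqxx.
split.
- exact: distr_e.
- exact: sf.
- apply/NEpure => j k nj jk.
  by move: (hf j) => /forallP /(_ k) /implyP /(_ nj) /implyP /(_ jk).
move=> s' nu' ds cs ns; rewrite lpure.
have [j0 sj0] : exists j, 0 < s' j.
  case: (boolP [exists j, 0 < s' j]) => [/existsP //|].
  rewrite negb_exists => /forallP h; exfalso.
  have : \sum_j s' j = 0.
    apply: big1 => j _; apply/eqP; rewrite eq_le ds.1 andbT.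
    by move: (h j); rewrite -leNgt.
  by rewrite ds.2 => /eqP; rewrite oner_eq0.
have [i1 [si1 imin]] := finite_min (fun j => (ratr (cl j (nu' j).+1) : K)) (P := fun j => 0 < s' j) sj0.
have lowb : (ratr (cl i1 (nu' i1).+1) : K) <= lcost cl s' nu'.
  rewrite /lcost -[X in X <= _]mul1r -ds.2 mulr_suml; apply: ler_sum => j _.
  case: (boolP (0 < s' j)) => h; first by apply: ler_wpM2l; [exact: ltW h | exact: (imin j h)].
  have -> : s' j = 0 by apply/eqP; rewrite eq_le ds.1 andbT leNgt.
  by rewrite !mul0r.
have s1 : forall j, s' j <= 1.
  move=> j; rewrite -ds.2 (bigD1 j) //= lerDl; apply: sumr_ge0 => l _; exact: ds.1.
have H1 : forall j, j != i1 -> (0 < nu' j)%N -> d i1 j (nu' j) <= d i1 i1 (nu' i1).+1.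
  move=> j ji nj; rewrite /d (negbTE ji) eqxx.
  apply: le_trans (le_trans _ (ns j i1 nj ji)) _.
    rewrite /fcost; have := (hmono j (nu' j)).2; rewrite -(ler_rat K); have := ds.1 j.
    set A := ratr _; set B := ratr _; set sj := s' j; move=> h1 h2; nra.
  rewrite /fcost; have := (hmono i1 (nu' i1).+1).2; rewrite -(ler_rat K); have := s1 i1.
  set A := ratr _; set B := ratr _; set sj := s' i1; move=> h1 h2; nra.
have [nu [snu [hi hne]]] := cap_NE (hd i1) cs H1.
apply: le_trans (fmin _ (toP i1 nu snu hne)) _.
rewrite /phi /= (conv nu snu).
have hi1 : ((nu i1).+1 <= (nu' i1).+1)%N by rewrite ltnS.
exact: le_trans (clmono i1 _ _ hi1) lowb.
Qed.
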